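(* In every complete lattice $\mathbf L$, the set $\Gamma$ of all non-generators is closed under binary meets and binary joins: if $a,b\in\Gamma$ then $a\wedge b\in\Gamma$ and $a\vee b\in\Gamma$.
   Context: A complete sublattice of a complete lattice $\mathbf L$ is a subset closed under arbitrary meets and joins computed in $L$ (including those of the empty set). For $X\subseteq L$, $\langle X\rangle$ is the intersection of all complete sublattices containing $X$, and $\langle X,a\rangle=\langle X\cup\{a\}\rangle$. An element $a$ is a non-generator if for every $X\subseteq L$, $\langle X,a\rangle=L$ implies $\langle X\rangle=L$. *)

(* Defs.v *)
From HB Require Import structures.
From mathcomp Require Import all_boot all_order.
Set Implicit Arguments. Unset Strict Implicit. Unset Printing Implicit Defensive.
Import Order.TTheory.
Local Open Scope order_scope.

Section CompleteLattice.
Context {d : Order.disp_t} {T : latticeType d}.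

Definition is_ub (X : T -> Prop) (u : T) : Prop := forall x, X x -> x <= u.
Definition is_lb (X : T -> Prop) (l : T) : Prop := forall x, X x -> l <= x.
Definition is_lub (X : T -> Prop) (u : T) : Prop :=
  is_ub X u /\ forall v, is_ub X v -> u <= v.
Definition is_glb (X : T -> Prop) (l : T) : Prop :=
  is_lb X l /\ forall v, is_lb X v -> v <= l.

Definition complete_lattice : Prop :=
  forall X : T -> Prop, (exists u, is_lub X u) /\ (exists l, is_glb X l).

Definition complete_sublattice (S : T -> Prop) : Prop :=
  forall X : T -> Prop, (forall x, X x -> S x) ->
    (forall u, is_lub X u -> S u) /\ (forall l, is_glb X l -> S l).

Definition generated (X : T -> Prop) : T -> Prop :=
  fun y => forall S, complete_sublattice S -> (forall x, X x -> S x) -> S y.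

Definition generates (X : T -> Prop) : Prop := forall y, generated X y.

Definition non_generator (a : T) : Prop :=
  forall X : T -> Prop, generates (fun x => X x \/ x = a) -> generates X.

End CompleteLattice.

(* Main.v *)
Require Import Defs.
From HB Require Import structures.
From mathcomp Require Import all_boot all_order.
Local Open Scope order_scope.
Import Order.TTheory.

Lemma key_ng (d : Order.disp_t) (T : latticeType d) (a b c : T)
  (H : forall S : T -> Prop, complete_sublattice S -> S a -> S b -> S c) :
  non_generator a -> non_generator b -> non_generator c.
Proof.
intros na nb X gen. apply na. apply (nb (fun x => X x \/ x = a)).
intros y S hS hsub. apply (gen y S hS).
intros x [Hx| ->].
- apply hsub; left; left; exact Hx.
- apply H; [exact hS| apply hsub; left; right; reflexivity | apply hsub; right; reflexivity].
Qed.

Theorem mainTheorem5 (d : Order.disp_t) (T : latticeType d)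
  (hT : @complete_lattice d T) (a b : T) :
  non_generator a -> non_generator b ->
  non_generator (a `&` b) /\ non_generator (a `|` b).
Proof.
intros na nb; split; apply (@key_ng d T a b); auto;
  intros S hS Sa Sb;
  (destruct (hS (fun x => x = a \/ x = b)) as [Hu Hl];
   [intros x [-> | ->]; assumption | ]).
- apply Hl. split.
  + intros x [-> | ->]; [exact: leIl | exact: leIr].
  + intros v Hv. rewrite lexI. rewrite (Hv a (or_introl erefl)) (Hv b (or_intror erefl)). reflexivity.
- apply Hu. split.
  + intros x [-> | ->]; [exact: leUl | exact: leUr].
  + intros v Hv. rewrite leUx. rewrite (Hv a (or_introl erefl)) (Hv b (or_intror erefl)). reflexivity.
Qed.
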